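(* Let $G$ be a connected abelian Lie group with Lie algebra $\mathfrak{g}$, a real vector space of dimension $n$, and exponential map $\exp:\mathfrak{g}\to G$ (the universal covering homomorphism). Let $T$ be the maximal torus of $G$, $\mathfrak{t}=\exp^{-1}(T)$ its Lie algebra, and $\Gamma=\ker\exp$, a lattice in $\mathfrak{t}$; let $v_1,\ldots,v_t$ be a basis of $\Gamma$. Let $v_{t+1},\ldots,v_{n+1}$ be elements of $\mathfrak{g}$. Then the subsemigroup of $G$ generated by $\exp(v_{t+1}),\ldots,\exp(v_{n+1})$ is dense in $G$ if and only if the following two conditions hold: (a) the vectors $v_1,\ldots,v_n$ form a basis of $\mathfrak{g}$ over $\mathbb{R}$; (b) writing $v_{n+1}=\alpha_1v_1+\cdots+\alpha_nv_n$, we have $\alpha_i<0$ for $i=t+1,\ldots,n$, and $1,\alpha_1,\ldots,\alpha_n$ are linearly independent over $\mathbb{Q}$.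
   Context: The maximal torus of a connected abelian Lie group is its unique maximal compact subgroup (a compact connected abelian Lie group). *)

(* Defs.v *)
From HB Require Import structures.
From mathcomp Require Import all_boot all_order all_algebra.
From mathcomp Require Import all_classical all_reals all_analysis.
From mathcomp Require Import zify.
Set Implicit Arguments. Unset Strict Implicit. Unset Printing Implicit Defensive.
Import Order.TTheory GRing.Theory Num.Theory.
Import numFieldNormedType.Exports.
Local Open Scope ring_scope.
Local Open Scope classical_set_scope.

(* Model of a connected abelian Lie group G of dimension n:
   its Lie algebra g = 'rV[R]_n, exp : g -> G the universal covering
   homomorphism, so G = g / Gamma with Gamma = ker exp, the Z-span of
   R-linearly independent vectors b_0, ..., b_(t-1).  A subset of G is
   represented by its (Gamma-invariant) preimage in g; since exp is an
   open continuous surjection, a subset of G is dense iff its preimage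
   in g is dense. *)

Definition zspan (R : realType) (n t : nat) (b : 'I_t -> 'rV[R]_n)
  : set 'rV[R]_n :=
  [set x | exists z : 'I_t -> int, x = \sum_(i < t) (z i)%:~R *: b i].

(* Preimage under exp of the subsemigroup of G generated by
   exp(w_0), ..., exp(w_(m-1)): all nonempty products
   exp(w_0)^k_0 ... exp(w_(m-1))^k_(m-1) (k not all zero), lifted to g
   and translated by Gamma = ker exp. *)
Definition semigroup_preimage (R : realType) (n t m : nat)
  (b : 'I_t -> 'rV[R]_n) (w : 'I_m -> 'rV[R]_n) : set 'rV[R]_n :=
  [set x | exists k : 'I_m -> nat, (exists j, k j != 0%N) /\
     exists2 g, zspan b g & x = \sum_(j < m) (k j)%:R *: w j + g].

Definition Q_lin_indep (R : realType) (k : nat) (x : 'I_k -> R) : Prop :=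
  forall c : 'I_k -> rat,
    \sum_(i < k) ratr (c i) * x i = 0 -> forall i, c i = 0.

Lemma gen_idx_subproof (n t : nat) (j : 'I_(n.+1 - t)) : (t + j < n.+1)%N.
Proof. have := ltn_ord j; lia. Qed.

Definition gen_idx (n t : nat) (j : 'I_(n.+1 - t)) : 'I_n.+1 :=
  Ordinal (gen_idx_subproof j).

(* Main.v *)
Require Import Defs.
From HB Require Import structures.
From mathcomp Require Import all_boot all_order all_algebra.
From mathcomp Require Import all_classical all_reals all_analysis.
From mathcomp Require Import zify ring lra.
Set Implicit Arguments. Unset Strict Implicit. Unset Printing Implicit Defensive.
Import Order.TTheory GRing.Theory Num.Theory.
Import numFieldNormedType.Exports.
Local Open Scope ring_scope.
Local Open Scope classical_set_scope.


Section K.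
Variable R : realType.

Definition isInt (x : R) := exists z : int, x = z%:~R.

Definition fr (x : R) := x - (Num.floor x)%:~R.

Lemma fr_ge0 x : 0 <= fr x.
Proof. by rewrite /fr subr_ge0 floor_le. Qed.

Lemma fr_lt1 x : fr x < 1.
Proof. rewrite /fr; have := floorD1_gt x; rewrite intrD; lra. Qed.

Lemma pigeon_aux (K : nat) (x : R) : (0 < K)%N ->
  (`|Num.floor (K%:R * fr x)|%N < K)%N.
Proof.
move=> K0.
have h0 : 0 <= K%:R * fr x by rewrite mulr_ge0 ?fr_ge0.
have h1 : K%:R * fr x < K%:R.
  by rewrite -[X in _ < X]mulr1 ltr_pM2l ?fr_lt1 // ltr0n.
have f0 : (0 <= Num.floor (K%:R * fr x))%R by rewrite floor_ge0.
have : (Num.floor (K%:R * fr x) < K%:Z)%R by rewrite floor_lt_int.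
by case: (Num.floor _) f0 => // k _; rewrite ltz_nat.
Qed.

Lemma pigeon d (b : 'I_d -> R) (N : nat) :
  exists m : nat, (0 < m)%N /\ exists p : 'I_d -> int,
    forall i, `|m%:R * b i - (p i)%:~R| < (N.+1)%:R^-1.
Proof.
set K := N.+1.
pose f (m : 'I_(K ^ d).+1) : {ffun 'I_d -> 'I_K} :=
  [ffun i => inord `|Num.floor (K%:R * fr (m%:R * b i))|%N].
have [a [c [fac ac]]] : exists a c, f a = f c /\ (a < c)%N.
  suff [a [c [fac ac]]] : exists a c, f a = f c /\ a != c.
    case: (ltngtP a c) => h.
    - by exists a, c.
    - by exists c, a.
    - by move: ac; rewrite (val_inj h) eqxx.
  apply: contrapT => H.
  have injf : injective f.
    move=> a c fac; apply/eqP; apply/negPn/negP => ac; apply: H.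
    by exists a, c.
  have := @leq_card _ _ f injf; rewrite card_ffun !card_ord /=.
  by rewrite ltnn.
exists (c - a)%N; split; first by rewrite subn_gt0.
exists (fun i => Num.floor (c%:R * b i) - Num.floor (a%:R * b i)).
move=> i.
have := congr1 (fun g : {ffun 'I_d -> 'I_K} => g i) fac; rewrite /f !ffunE.
move/(congr1 val); rewrite /= !inordK ?pigeon_aux //.
set xa := a%:R * b i; set xc := c%:R * b i.
move=> e.
have ea : (Num.floor (K%:R * fr xa)) = Num.floor (K%:R * fr xc).
  have g1 : (0 <= Num.floor (K%:R * fr xa))%R by rewrite floor_ge0 mulr_ge0 ?fr_ge0.
  have g2 : (0 <= Num.floor (K%:R * fr xc))%R by rewrite floor_ge0 mulr_ge0 ?fr_ge0.
  by rewrite -(gez0_abs g1) -(gez0_abs g2) e.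
have [l1 u1] := andP (floor_itv (K%:R * fr xa)).
have [l2 u2] := andP (floor_itv (K%:R * fr xc)).
rewrite ea in l1 u1.
have hK : 0 < K%:R :> R by rewrite ltr0n.
have hd : `|K%:R * fr xc - K%:R * fr xa| < 1.
  rewrite intrD in u1 u2; rewrite ltr_norml; apply/andP; split.
   move: l1 u1 l2 u2; set A := (_ * fr xa); set B := (_ * fr xc); set F := (_%:~R).
   move=> *; lra.
   move: l1 u1 l2 u2; set A := (_ * fr xa); set B := (_ * fr xc); set F := (_%:~R).
   move=> *; lra.
have -> : (c - a)%N%:R * b i - (Num.floor xc - Num.floor xa)%:~R
          = fr xc - fr xa.
  rewrite (natrB _ (ltnW ac)) /fr intrB.
  rewrite /xa /xc; set u := Num.floor _; set v := Num.floor _; ring.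
rewrite -mulrBr normrM gtr0_norm // in hd.
by rewrite -(mul1r (K%:R)^-1) ltr_pdivlMr // mulrC.
Qed.

Lemma isInt_int (z : int) : isInt z%:~R.
Proof. by exists z. Qed.

Lemma small_inv (x : R) : 0 < x -> exists N : nat, (N.+1)%:R^-1 < x.
Proof.
move=> x0.
have f0 : (0 <= Num.floor x^-1)%R by rewrite floor_ge0 invr_ge0 ltW.
exists `|Num.floor x^-1|%N.
have h1 : x^-1 < (`|Num.floor x^-1|%N.+1)%:R.
  rewrite -addn1 natrD natr_absz ger0_norm //.
  by have := floorD1_gt x^-1; rewrite intrD.
have hp : 0 < (`|Num.floor x^-1|%N.+1)%:R :> R by rewrite ltr0n.
rewrite -[X in _ < X](invrK x) ltf_pV2 ?posrE ?invr_gt0 //.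
Qed.

Lemma kron_gen (d : nat) : forall r (beta : 'I_r -> 'I_d -> R),
  (forall a : 'I_d -> int, (exists i, a i != 0) ->
     exists j, ~ isInt (\sum_i (a i)%:~R * beta j i)) ->
  forall (y : 'I_d -> R) (e : R), 0 < e ->
  exists z : 'I_r -> int, exists p : 'I_d -> int,
    forall i, `|\sum_j (z j)%:~R * beta j i + (p i)%:~R - y i| < e.
Proof.
elim: d => [|d IH] r beta H y e e0.
  by exists (fun _ => 0), (fun _ => 0); case.
have [j0 irr] : exists j0, forall m : nat, (0 < m)%N -> ~ isInt (m%:R * beta j0 ord0).
  apply: contrapT => nH.
  have hM : forall j, exists m : nat, (0 < m)%N /\ isInt (m%:R * beta j ord0).
    move=> j; apply: contrapT => nj; apply: nH; exists j => m m0 im; apply: nj.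
    by exists m.
  have [M hMf] := choice hM.
  pose D := (\prod_j M j)%N.
  have D0 : (0 < D)%N by rewrite prodn_gt0 // => j; case: (hMf j).
  have nz : exists i : 'I_d.+1, (if i == ord0 then D%:Z else 0) != 0.
    by exists ord0; rewrite eqxx; lia.
  have [j nj] := H _ nz.
  apply: nj.
  rewrite big_ord_recl eqxx big1 ?addr0; last first.
    by move=> i _; rewrite eq_sym (negbTE (neq_lift _ _)) mul0r.
  rewrite /D (bigD1 j) //= -pmulrn natrM.
  case: (hMf j) => _ [z hz].
  exists ((\prod_(k | k != j) M k)%:Z * z).
  rewrite intrM -hz mulrA; congr (_ * _).
  by rewrite mulrC.
have e20 : 0 < e / 2 by lra.
have [N hN] := @small_inv (e/2) e20.
have [m [m0 [pp hp]]] := pigeon (beta j0) N.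
set lam := fun i => m%:R * beta j0 i - (pp i)%:~R.
have hlam : forall i, `|lam i| < e/2 by move=> i; exact: lt_trans (hp i) hN.
have eta0 : lam ord0 != 0.
  apply/eqP => h; apply: (irr m m0); exists (pp ord0); apply/eqP.
  by rewrite -subr_eq0; apply/eqP.
set eta := lam ord0.
pose g (i : 'I_d) := - (lam (lift ord0 i) / eta).
pose pi (x : 'I_d.+1 -> R) (i : 'I_d) := x (lift ord0 i) + x ord0 * g i.
pose beta' (j : 'I_r.+1) : 'I_d -> R :=
  if unlift ord0 j is Some k then pi (beta k) else g.
have H' : forall a' : 'I_d -> int, (exists i, a' i != 0) ->
    exists j, ~ isInt (\sum_i (a' i)%:~R * beta' j i).
  move=> a' [i0 ai0]; apply: contrapT => nH.
  have allI : forall j, isInt (\sum_i (a' i)%:~R * beta' j i).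
    move=> j; apply: contrapT => nj; apply: nH; by exists j.
  have [c hc] := allI ord0.
  rewrite /beta' unlift_none in hc.
  pose a (i : 'I_d.+1) := if unlift ord0 i is Some k then a' k else c.
  have nza : exists i, a i != 0 by exists (lift ord0 i0); rewrite /a liftK.
  have [j nj] := H a nza.
  apply: nj.
  have := allI (lift ord0 j); rewrite /beta' liftK /pi.
  suff -> : \sum_i (a i)%:~R * beta j i =
     \sum_i (a' i)%:~R * (beta j (lift ord0 i) + beta j ord0 * g i) by [].
  rewrite big_ord_recl /a unlift_none.
  under eq_bigr do rewrite liftK.
  rewrite -hc.
  under [RHS]eq_bigr do rewrite mulrDr.
  rewrite big_split /= addrC; congr (_ + _).
  rewrite mulr_suml; apply: eq_bigr => i _; ring.
have [z' [p' hz]] := IH _ beta' H' (pi y) (e/2) e20.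
pose P0 (k : 'I_d.+1) : int := if unlift ord0 k is Some i then p' i else z' ord0.
pose X (k : 'I_d.+1) :=
  \sum_(j < r) (z' (lift ord0 j))%:~R * beta j k + (P0 k)%:~R - y k.
have hX : forall i, \sum_j (z' j)%:~R * beta' j i + (p' i)%:~R - pi y i = pi X i.
  move=> i; rewrite /pi /X /P0 liftK unlift_none big_ord_recl /beta' unlift_none.
  under eq_bigr do rewrite liftK.
  under eq_bigr do rewrite mulrDr.
  rewrite big_split /=.
  have e1 : \sum_(j < r) (z' (lift ord0 j))%:~R * (beta j ord0 * g i) =
      (\sum_(j < r) (z' (lift ord0 j))%:~R * beta j ord0) * g i.
    by rewrite mulr_suml; apply: eq_bigr => j _; rewrite mulrA.
  rewrite e1; ring.
pose s := X ord0 / eta.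
pose J := Num.floor s.
exists (fun j => z' (lift ord0 j) - J * (if j == j0 then m%:Z else 0)).
exists (fun k => P0 k + J * pp k).
move=> k.
have eqk : \sum_j (z' (lift ord0 j) - J * (if j == j0 then m%:Z else 0))%:~R * beta j k
     + (P0 k + J * pp k)%:~R - y k = X k - J%:~R * lam k.
  under eq_bigr do rewrite intrB mulrBl.
  rewrite sumrB.
  have -> : \sum_j (J * (if j == j0 then m%:Z else 0))%:~R * beta j k
       = J%:~R * (m%:R * beta j0 k).
    rewrite (bigD1 j0) //= eqxx big1 ?addr0; last first.
      by move=> j /negbTE ->; rewrite mulr0 mul0r.
    by rewrite intrM mulrA.
  rewrite /X /lam intrD intrM; ring.
rewrite eqk.
have /andP [sl su] := floor_itv s.
rewrite intrD in su.
have hs : 0 <= s - J%:~R < 1 by apply/andP; split; lra.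
have /andP [hs1 hs2] := hs.
case: (unliftP ord0 k) => [i ->|->].
- have -> : X (lift ord0 i) = pi X i + s * lam (lift ord0 i).
    by rewrite /pi /g /s; field.
  have := hz i; rewrite hX => hzi.
  have hl := hlam (lift ord0 i).
  rewrite -addrA -mulrBl.
  apply: (le_lt_trans (ler_normD _ _)).
  rewrite normrM (ger0_norm hs1).
  have : (s - J%:~R) * `|lam (lift ord0 i)| <= `|lam (lift ord0 i)|.
    by rewrite ler_piMl // ltW.
  lra.
- have -> : X ord0 - J%:~R * lam ord0 = eta * (s - J%:~R).
    by rewrite /s -/eta; field.
  rewrite normrM (ger0_norm hs1).
  have hl := hlam ord0; rewrite -/eta in hl.
  have : `|eta| * (s - J%:~R) <= `|eta| by rewrite ler_piMr // ltW.
  lra.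
Qed.
End K.



Section T.
Variable R : realType.

Lemma rV_ballE n (x y : 'rV[R]_n) e :
  ball x e y <-> 0 < e /\ forall j, `|x 0 j - y 0 j| < e.
Proof.
rewrite /ball /=; split.
- case=> e0 H; split=> // j; have := H 0 j; by rewrite /ball /=.
- case=> e0 H; split=> // i j; rewrite /ball /= (ord1 i); exact: H.
Qed.

Lemma dense_rVP n (S : set 'rV[R]_n) :
  dense S <-> forall (x : 'rV[R]_n) e, 0 < e -> exists s : 'rV[R]_n, S s /\ forall j, `|x 0 j - s 0 j| < e.
Proof.
split.
- move=> dS x e e0.
  have h1 : ball x e !=set0 by exists x; exact: ballxx.
  have h2 : open (ball x e) by exact: ball_open.
  have [s [bs Ss]] := dS _ h1 h2.
  by exists s; split=> //; case/rV_ballE: bs.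
- move=> H O [x Ox] oO.
  have : nbhs x O by apply: open_nbhs_nbhs; split.
  move=> /nbhs_ballP [e e0 sub].
  have [s [Ss Hs]] := H x e e0.
  exists s; split=> //; apply: sub; exact/rV_ballE.
Qed.
End T.


Lemma kron_pos (R : realType) n (al : 'I_n -> R) :
  (forall a : 'I_n -> int, (exists i, a i != 0) ->
     ~ isInt (\sum_i (a i)%:~R * al i)) ->
  forall (c : 'I_n -> R) (e : R), 0 < e -> forall M : nat,
  exists m : nat, (M <= m)%N /\ exists p : 'I_n -> int,
    forall i, `|m%:R * al i + (p i)%:~R - c i| < e.
Proof.
move=> Hal c e e0 M.
have e20 : 0 < e / 2 by lra.
have H1 : forall a : 'I_n -> int, (exists i, a i != 0) ->
    exists j : 'I_1, ~ isInt (\sum_i (a i)%:~R * (fun _ : 'I_1 => al) j i).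
  by move=> a /Hal h; exists ord0.
have [z [p hz]] := kron_gen H1 c e20.
set m0 := z ord0.
set K := (`|m0|%N + M)%N.
have [N hN] := @small_inv R (e/2) e20.
have [mm [mm0 [q hq]]] := pigeon (fun i => K%:R * al i) N.
set dd := (mm * K)%N.
have hdd : (K <= dd)%N by rewrite /dd leq_pmull.
have pos : (0 <= m0 + dd%:Z)%R.
  have : (`|m0|%N <= dd)%N by apply: leq_trans hdd; rewrite /K leq_addr.
  lia.
exists (absz (m0 + dd%:Z)); split.
  have : (M <= dd)%N by apply: leq_trans hdd; rewrite /K leq_addl.
  have : (`|m0|%N <= dd)%N by apply: leq_trans hdd; rewrite /K leq_addr.
  lia.
exists (fun i => p i - q i) => i.
have h1 := hz i; rewrite big_ord1 in h1.
have h2 := lt_trans (hq i) hN.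
rewrite natr_absz (ger0_norm pos) intrD /= intrD intrN.
have -> : (dd%:Z)%:~R = mm%:R * K%:R :> R by rewrite -pmulrn natrM.
have -> : (m0%:~R + mm%:R * K%:R) * al i + ((p i)%:~R + - (q i)%:~R) - c i
   = ((z ord0)%:~R * al i + (p i)%:~R - c i) + (mm%:R * (K%:R * al i) - (q i)%:~R).
  by rewrite /m0; ring.
apply: (le_lt_trans (ler_normD _ _)); lra.
Qed.


Lemma notdense (R : realType) n (S : set 'rV[R]_n) (r : 'cV[R]_n) (a b : R) :
  a < b -> (exists x0 : 'rV[R]_n, (x0 *m r) 0 0 != 0) ->
  (forall x, S x -> ~ (a < (x *m r) 0 0 < b)) -> ~ dense S.
Proof.
move=> ab [x0 nx0] HS /dense_rVP dS.
pose L := fun x : 'rV[R]_n => (x *m r) 0 0.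
have Lsc : forall (k : R) x, L (k *: x) = k * L x.
  by move=> k x; rewrite /L -scalemxAl mxE.
pose x1 := ((a + b) / 2 / L x0) *: x0.
have Lx1 : L x1 = (a + b) / 2 by rewrite Lsc divfK.
pose C := \sum_j `|r j 0| + 1.
have sge0 : 0 <= \sum_j `|r j 0| by apply: sumr_ge0 => j _.
have C0 : 0 < C by rewrite /C; lra.
pose rho := (b - a) / 2 / C.
have rho0 : 0 < rho by rewrite /rho divr_gt0 //; lra.
have [s [Ss hs]] := dS x1 rho rho0.
apply: (HS s Ss).
have hdiff : `|L s - L x1| <= rho * \sum_j `|r j 0|.
  have -> : L s - L x1 = \sum_j (s 0 j - x1 0 j) * r j 0.
    by rewrite /L !mxE -sumrB; apply: eq_bigr => j _; ring.
  rewrite mulr_sumr; apply: le_trans (ler_norm_sum _ _ _) _.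
  apply: ler_sum => j _; rewrite normrM ler_wpM2r //.
  by rewrite distrC; exact: ltW (hs j).
have hrC : rho * C = (b - a) / 2 by rewrite /rho divfK // gt_eqF.
have : rho * \sum_j `|r j 0| < rho * C by rewrite ltr_pM2l // /C; lra.
rewrite hrC -/(L s) => h.
move: hdiff; rewrite Lx1 => hd.
have := ler_norm (L s - (a+b)/2); have := ler_normr (L s - (a+b)/2).
move=> _ _.
rewrite ler_norml in hd.
case/andP: hd => hd1 hd2.
apply/andP; split; lra.
Qed.

Section SG.
Lemma S_elim (R : realType) n t (htn : (t <= n)%N) (v : 'I_n.+1 -> 'rV[R]_n) x :
  semigroup_preimage (fun i : 'I_t => v (widen_ord (leqW htn) i))
    (fun j : 'I_(n.+1 - t) => v (gen_idx j)) x ->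
  exists (k : 'I_(n.+1 - t) -> nat) (z : 'I_t -> int),
    x = \sum_j (k j)%:R *: v (gen_idx j) + \sum_i (z i)%:~R *: v (widen_ord (leqW htn) i).
Proof. by case=> k [_ [g [z ->] ->]]; exists k, z. Qed.

Lemma S_intro (R : realType) n t (htn : (t <= n)%N) (v : 'I_n.+1 -> 'rV[R]_n)
  (C : 'I_n.+1 -> int) :
  (forall i : 'I_n.+1, (t <= i)%N -> 0 <= C i) ->
  (exists i : 'I_n.+1, (t <= i)%N /\ C i != 0) ->
  semigroup_preimage (fun i : 'I_t => v (widen_ord (leqW htn) i))
    (fun j : 'I_(n.+1 - t) => v (gen_idx j)) (\sum_i (C i)%:~R *: v i).
Proof.
move=> Cpos [i0 [ti0 Ci0]].
pose G (k : nat) := (C (inord k))%:~R *: v (inord k).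
have E1 : \sum_(i < n.+1) (C i)%:~R *: v i = \sum_(0 <= k < n.+1) G k.
  by rewrite big_mkord; apply: eq_bigr => i _; rewrite /G inord_val.
rewrite E1 (big_cat_nat (n:=t)) //=; last by rewrite leqW.
have E2 : \sum_(t <= k < n.+1) G k = \sum_(j < n.+1 - t) G (j + t)%N.
  by rewrite -{1}(add0n t) big_addn big_mkord.
rewrite E2 big_mkord.
exists (fun j => `|C (gen_idx j)|%N); split.
  have hj : (i0 - t < n.+1 - t)%N by have := ltn_ord i0; lia.
  exists (Ordinal hj).
  have -> : gen_idx (Ordinal hj) = i0 by apply: val_inj => /=; lia.
  by rewrite absz_eq0.
exists (\sum_(i < t) (C (widen_ord (leqW htn) i))%:~R *: v (widen_ord (leqW htn) i)).
  by exists (fun i => C (widen_ord (leqW htn) i)).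
rewrite addrC; congr (_ + _).
- apply: eq_bigr => j _; rewrite /G.
  have -> : inord (j + t)%N = gen_idx j.
    apply: val_inj; rewrite /= inordK; first by rewrite addnC.
    by have := ltn_ord j; lia.
  rewrite natr_absz ger0_norm //; apply: Cpos; rewrite /=; lia.
- apply: eq_bigr => i _; rewrite /G.
  have -> : inord i = widen_ord (leqW htn) i.
    by apply: val_inj; rewrite /= inordK //; have := ltn_ord i; lia.
  by [].
Qed.
End SG.


Definition isMult (R : realType) (c y : R) := exists N : int, y = N%:~R * c.

Lemma isMult_add (R : realType) (c x y : R) : isMult c x -> isMult c y -> isMult c (x + y).
Proof. by move=> [a ->] [b ->]; exists (a + b); rewrite intrD mulrDl. Qed.

Lemma isMult0 (R : realType) (c : R) : isMult c 0.
Proof. by exists 0; rewrite mul0r. Qed.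

Lemma isMult_sum (R : realType) (c : R) m (F : 'I_m -> R) :
  (forall i, isMult c (F i)) -> isMult c (\sum_i F i).
Proof.
move=> H; elim/big_ind: _ => //; [exact: isMult0 | exact: isMult_add].
Qed.

Lemma isMult_zmul (R : realType) (c x : R) (z : int) : isMult c x -> isMult c (z%:~R * x).
Proof. by move=> [a ->]; exists (z * a); rewrite intrM mulrA. Qed.

Lemma isMult_nmul (R : realType) (c x : R) (k : nat) : isMult c x -> isMult c (k%:R * x).
Proof. by move=> h; have := isMult_zmul k%:Z h; rewrite -pmulrn. Qed.

Lemma mult_gap (R : realType) (c : R) : exists a b : R, a < b /\ forall N : int, ~ (a < N%:~R * c < b).
Proof.
case: (eqVneq c 0) => [->|c0].
  exists 1, 2; split; first lra.
  by move=> N; rewrite mulr0 => /andP [h1 h2]; lra.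
have cp : 0 < `|c| by rewrite normr_gt0.
exists (`|c| / 3), (2 * `|c| / 3); split; first lra.
move=> N /andP [h1 h2].
case: (eqVneq N 0) => [N0 | Nn0].
  by move: h1; rewrite N0 mul0r; lra.
have hN : 1 <= `|N%:~R : R|.
  rewrite -intr_norm ler1z; lia.
have hp : 0 < N%:~R * c by lra.
have : `|N%:~R * c| = N%:~R * c by rewrite gtr0_norm.
rewrite normrM => e.
have : `|c| <= `|N%:~R : R| * `|c| by rewrite ler_peMl.
lra.
Qed.

Lemma Lcomb (R : realType) n (r : 'cV[R]_n) m (c : 'I_m -> R) (u : 'I_m -> 'rV[R]_n) :
  ((\sum_j c j *: u j) *m r) 0 0 = \sum_j c j * (u j *m r) 0 0.
Proof.
rewrite mulmx_suml summxE; apply: eq_bigr => j _.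
by rewrite -scalemxAl mxE.
Qed.

Lemma vcase n (i : 'I_n.+1) : i = ord_max \/ exists i' : 'I_n, i = widen_ord (leqnSn n) i'.
Proof.
case: (unliftP ord_max i) => [j ->|->]; last by left.
right; exists j; apply: val_inj; rewrite /= /bump leqNgt ltn_ord //.
Qed.

Lemma row_col_E (R : realType) n (M N : 'M[R]_n) i j : (row i M *m col j N) 0 0 = (M *m N) i j.
Proof. by rewrite !mxE; apply: eq_bigr => k _; rewrite !mxE. Qed.

Lemma x_col_E (R : realType) n (x : 'rV[R]_n) (N : 'M[R]_n) j : (x *m col j N) 0 0 = (x *m N) 0 j.
Proof. by rewrite !mxE; apply: eq_bigr => k _; rewrite !mxE. Qed.


Lemma Lx_S (R : realType) n t (htn : (t <= n)%N) (v : 'I_n.+1 -> 'rV[R]_n) (r : 'cV[R]_n) x :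
  semigroup_preimage (fun i : 'I_t => v (widen_ord (leqW htn) i))
    (fun j : 'I_(n.+1 - t) => v (gen_idx j)) x ->
  exists (k : 'I_(n.+1 - t) -> nat) (z : 'I_t -> int),
    (x *m r) 0 0 = \sum_j (k j)%:R * (v (gen_idx j) *m r) 0 0
       + \sum_i (z i)%:~R * (v (widen_ord (leqW htn) i) *m r) 0 0.
Proof.
move/S_elim => [k [z ->]]; exists k, z.
by rewrite mulmxDl mxE !Lcomb.
Qed.

Lemma mult_S (R : realType) n t (htn : (t <= n)%N) (v : 'I_n.+1 -> 'rV[R]_n) (r : 'cV[R]_n) (c : R) x :
  (forall i, isMult c ((v i *m r) 0 0)) ->
  semigroup_preimage (fun i : 'I_t => v (widen_ord (leqW htn) i))
    (fun j : 'I_(n.+1 - t) => v (gen_idx j)) x -> isMult c ((x *m r) 0 0).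
Proof.
move=> H /(Lx_S r) [k [z ->]].
apply: isMult_add; apply: isMult_sum => i.
- exact: isMult_nmul.
- exact: isMult_zmul.
Qed.

Lemma notdense_mult (R : realType) n (S : set 'rV[R]_n) (r : 'cV[R]_n) (c : R) :
  (exists x0 : 'rV[R]_n, (x0 *m r) 0 0 != 0) ->
  (forall x, S x -> isMult c ((x *m r) 0 0)) -> ~ dense S.
Proof.
move=> hx0 H.
have [a [b [ab hab]]] := mult_gap c.
apply: (notdense ab hx0) => x /H [N ->]; exact: hab.
Qed.

Lemma forward (R : realType) (n t : nat) (htn : (t <= n)%N)
  (v : 'I_n.+1 -> 'rV[R]_n)
  (hGam : row_free (\matrix_(i < t) v (widen_ord (leqW htn) i))) :
  dense (semigroup_preimage
           (fun i : 'I_t => v (widen_ord (leqW htn) i))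
           (fun j : 'I_(n.+1 - t) => v (gen_idx j))) ->
  (row_free (\matrix_(i < n) v (widen_ord (leqnSn n) i)) /\
   row_full (\matrix_(i < n) v (widen_ord (leqnSn n) i))) /\
  (exists alpha : 'I_n -> R,
     v ord_max = \sum_(i < n) alpha i *: v (widen_ord (leqnSn n) i) /\
     (forall i : 'I_n, (t <= i)%N -> alpha i < 0) /\
     Q_lin_indep (fun i : 'I_n.+1 =>
                    if unlift ord0 i is Some j then alpha j else 1)).
Proof.
move=> dS.
set S := semigroup_preimage _ _ in dS.
set A := \matrix_(i < n) v (widen_ord (leqnSn n) i).
have rowA : forall i, v (widen_ord (leqnSn n) i) = row i A by move=> i; rewrite rowK.
have widA : forall i : 'I_t, v (widen_ord (leqW htn) i) = row (widen_ord htn i) A.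
  by move=> i; rewrite -rowA; congr v; apply: val_inj.
have fullA : row_full A.
  apply: contrapT => nf.
  have hr : (0 < \rank (kermx A^T))%N.
    rewrite mxrank_ker mxrank_tr subn_gt0.
    have := rank_leq_col A; move: nf; rewrite /row_full => nf h.
    by rewrite ltn_neqAle h andbT; apply/negP.
  have [i0 hi0] : exists i0, row i0 (kermx A^T) != 0.
    apply: contrapT => H; move: hr.
    suff -> : kermx A^T = 0 by rewrite mxrank0.
    apply/row_matrixP => i; rewrite row0.
    by apply/eqP; apply/negPn/negP => h; apply: H; exists i.
  set u := row i0 (kermx A^T) in hi0.
  have uA : u *m A^T = 0 by rewrite /u -row_mul mulmx_ker row0.
  have Ar : forall i : 'I_n, (row i A *m u^T) 0 0 = 0.
    move=> i; rewrite -row_mul mxE.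
    have : (u *m A^T)^T = A *m u^T by rewrite trmx_mul trmxK.
    by rewrite uA trmx0 => <-; rewrite mxE.
  have [j0 hj0] : exists j0, u 0 j0 != 0.
    apply: contrapT => H; apply: (negP hi0); apply/eqP/rowP => j.
    rewrite [X in _ = X]mxE; apply/eqP; apply/negPn/negP => h; apply: H; by exists j.
  apply: (@notdense_mult _ _ S (u^T) ((v ord_max *m u^T) 0 0)).
    exists (delta_mx 0 j0); rewrite -rowE.
    by rewrite (_ : row j0 u^T 0 0 = u 0 j0) // !mxE.
  move=> x Sx; apply: (@mult_S R n t htn v (u^T) _ x _ Sx) => i.
  case: (vcase i) => [->|[i' ->]]; first by exists 1; rewrite mul1r.
  by exists 0; rewrite rowA Ar mul0r.
  exact: dS.
have unitA : A \in unitmx by rewrite -row_full_unit.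
have freeA : row_free A by rewrite row_free_unit.
pose al := fun i => (v ord_max *m invmx A) 0 i.
have vmax : v ord_max = \sum_i al i *: v (widen_ord (leqnSn n) i).
  rewrite -{1}(mulmxKV unitA (v ord_max)) mulmx_sum_row.
  by apply: eq_bigr => i _; rewrite rowA.
split; first by split.
exists al; split; first exact: vmax.
have LrowI : forall (i j : 'I_n), (row i A *m col j (invmx A)) 0 0 = (i == j)%:R.
  by move=> i j; rewrite row_col_E mulmxV // mxE.
split.
- move=> j tj; rewrite ltNge; apply/negP => alj.
  have m21 : -2 < -1 :> R by lra.
  apply: (@notdense _ _ S (col j (invmx A)) (-2) (-1) m21 _ _ dS).
  + by exists (row j A); rewrite LrowI eqxx oner_eq0.
  + move=> x /(Lx_S (col j (invmx A))) [k [z ->]] /andP [h1 h2].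
    have : 0 <= \sum_j0 (k j0)%:R * (v (gen_idx j0) *m col j (invmx A)) 0 0
       + \sum_i (z i)%:~R * (v (widen_ord (leqW htn) i) *m col j (invmx A)) 0 0.
      rewrite [X in _ <= _ + X]big1 ?addr0; last first.
        move=> i _; rewrite widA LrowI.
        have -> : (widen_ord htn i == j) = false.
          by apply/negbTE; rewrite -val_eqE /=; have := ltn_ord i; lia.
        by rewrite mulr0.
      apply: sumr_ge0 => j0 _; apply: mulr_ge0 => //.
      case: (vcase (gen_idx j0)) => [->|[i' ->]].
        by rewrite x_col_E.
      by rewrite rowA LrowI ler0n.
    lra.
- move=> c hc i1; apply: contrapT => /eqP ci1.
  pose f := fun i : 'I_n.+1 => if unlift ord0 i is Some j then al j else 1.
  pose D : int := \prod_i denq (c i).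
  pose e (i : 'I_n.+1) : int := numq (c i) * \prod_(k | k != i) denq (c k).
  have eE : forall i, ratr (c i) * D%:~R = (e i)%:~R :> R.
    move=> i; rewrite /D (bigD1 i) //= /e !intrM.
    rewrite -[in ratr (c i)](divq_num_den (c i)) fmorph_div !rmorph_int.
    have dn : (denq (c i))%:~R != 0 :> R by rewrite intr_eq0 denq_neq0.
    by field.
  have rel : \sum_i (e i)%:~R * f i = 0.
    transitivity (D%:~R * \sum_i ratr (c i) * f i); last by rewrite hc mulr0.
    by rewrite mulr_sumr; apply: eq_bigr => i _; rewrite -eE; ring.
  have ei1 : e i1 != 0.
    rewrite /e mulf_neq0 ?numq_eq0 //.
    by apply/prodf_neq0 => k _; exact: denq_neq0.
  have {}rel : (e ord0)%:~R + \sum_k (e (lift ord0 k))%:~R * al k = 0.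
    rewrite -[RHS]rel big_ord_recl /f unlift_none mulr1; congr (_ + _).
    by apply: eq_bigr => k _; rewrite liftK.
  pose E : 'cV[R]_n := \col_k (e (lift ord0 k))%:~R.
  have Lrow : forall i, (row i A *m (invmx A *m E)) 0 0 = (e (lift ord0 i))%:~R.
    move=> i; rewrite mulmxA -row_mul mulmxV // -row_mul mul1mx.
    by rewrite !mxE.
  have Lmax : (v ord_max *m (invmx A *m E)) 0 0 = - (e ord0)%:~R.
    rewrite vmax Lcomb; under eq_bigr do rewrite rowA Lrow.
    apply/eqP; rewrite -subr_eq0 opprK addrC; apply/eqP; rewrite -[RHS]rel.
    by congr (_ + _); apply: eq_bigr => i _; rewrite mulrC.
  have HS : forall x, S x -> isMult 1 ((x *m (invmx A *m E)) 0 0).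
    move=> x Sx; apply: (@mult_S R n t htn v (invmx A *m E) 1 x _ Sx) => i.
    case: (vcase i) => [->|[i' ->]].
      by exists (- e ord0); rewrite Lmax mulr1 intrN.
    by exists (e (lift ord0 i')); rewrite rowA Lrow mulr1.
  have hx0 : exists x0 : 'rV[R]_n, (x0 *m (invmx A *m E)) 0 0 != 0.
    case: (pselect (exists k, e (lift ord0 k) != 0)) => [[k hk]|nk].
      by exists (row k A); rewrite Lrow intr_eq0.
    have z : forall k, e (lift ord0 k) = 0.
      by move=> k; apply/eqP; apply/negPn/negP => h; apply: nk; exists k.
    move: rel; rewrite big1; last by move=> k _; rewrite z mul0r.
    rewrite addr0 => /eqP; rewrite intr_eq0 => /eqP e0.
    case: (unliftP ord0 i1) => [k hk|hk]; move: ei1; rewrite hk ?z ?e0 eqxx //.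
  exact: (notdense_mult hx0 HS dS).
Qed.


Lemma le_sum_term (R : realType) n (F : 'I_n -> R) k :
  (forall i, 0 <= F i) -> F k <= \sum_i F i.
Proof.
move=> H; rewrite (bigD1 k) //= ler_wpDr //; exact: sumr_ge0.
Qed.

Lemma backward (R : realType) (n t : nat) (htn : (t <= n)%N)
  (v : 'I_n.+1 -> 'rV[R]_n) :
  (row_free (\matrix_(i < n) v (widen_ord (leqnSn n) i)) /\
   row_full (\matrix_(i < n) v (widen_ord (leqnSn n) i))) /\
  (exists alpha : 'I_n -> R,
     v ord_max = \sum_(i < n) alpha i *: v (widen_ord (leqnSn n) i) /\
     (forall i : 'I_n, (t <= i)%N -> alpha i < 0) /\
     Q_lin_indep (fun i : 'I_n.+1 =>
                    if unlift ord0 i is Some j then alpha j else 1)) ->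
  dense (semigroup_preimage
           (fun i : 'I_t => v (widen_ord (leqW htn) i))
           (fun j : 'I_(n.+1 - t) => v (gen_idx j))).
Proof.
move=> [[freeA fullA] [al [vmax [neg qind]]]].
set A := \matrix_(i < n) v (widen_ord (leqnSn n) i) in freeA fullA.
have unitA : A \in unitmx by rewrite -row_full_unit.
have hw : forall k : 'I_n, widen_ord (leqnSn n) k = lift ord_max k.
  by move=> k; apply: val_inj; rewrite /= /bump leqNgt ltn_ord.
have Hal : forall a : 'I_n -> int, (exists i, a i != 0) ->
    ~ isInt (\sum_i (a i)%:~R * al i).
  move=> a [i0 ai0] [z hz].
  pose c (i : 'I_n.+1) : rat := if unlift ord0 i is Some k then (a k)%:~R else - z%:~R.
  have hs : \sum_i ratr (c i) * (if unlift ord0 i is Some j then al j else 1) = 0.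
    rewrite big_ord_recl /c unlift_none mulr1.
    under eq_bigr do rewrite liftK rmorph_int.
    by rewrite hz rmorphN rmorph_int addNr.
  move: (qind c hs (lift ord0 i0)); rewrite /c liftK => /eqP.
  by rewrite intr_eq0 (negbTE ai0).
apply/dense_rVP => x eps eps0.
pose V (k : 'I_n) (j : 'I_n) := v (widen_ord (leqnSn n) k) 0 j.
pose cc := x *m invmx A.
pose Bs := \sum_k \sum_j `|V k j|.
have Bs0 : 0 <= Bs by apply: sumr_ge0 => k _; apply: sumr_ge0.
pose e' := eps / (Bs + 1).
have e'0 : 0 < e' by rewrite divr_gt0 //; lra.
have hB1 : 0 < Bs + 1 by lra.
have e'B : e' * (Bs + 1) = eps by rewrite /e' divfK // lt0r_neq0.
pose Bd := \sum_i (`|cc 0 i| + e') / `|al i|.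
have Bd0 : 0 <= Bd.
  by apply: sumr_ge0 => i _; apply: divr_ge0 => //; rewrite addr_ge0 // ltW.
pose M := (`|Num.floor Bd|%N).+1.
have MBd : Bd < M%:R.
  rewrite /M -addn1 natrD natr_absz ger0_norm ?floor_ge0 //.
  by have := floorD1_gt Bd; rewrite intrD.
have [m [Mm [p hp]]] := kron_pos Hal (fun i => cc 0 i) e'0 M.
pose C (i : 'I_n.+1) : int := if unlift ord_max i is Some k then p k else m%:Z.
exists (\sum_i (C i)%:~R *: v i); split.
- apply: S_intro.
  + move=> i ti; case: (vcase i) => [->|[k ek]].
      by rewrite /C unlift_none.
    rewrite ek hw /C liftK.
    have tk : (t <= k)%N by move: ti; rewrite ek.
    have alk := neg k tk.
    have hk := hp k.
    have : (`|cc 0 k| + e') / `|al k| <= Bd.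
      rewrite /Bd; apply: (@le_sum_term R n (fun i => (`|cc 0 i| + e') / `|al i|) k) => i0.
      by apply: divr_ge0 => //; rewrite addr_ge0 // ltW.
    have mM : (M%:R : R) <= m%:R by rewrite ler_nat.
    have aln : `|al k| = - al k by rewrite ltr0_norm.
    rewrite aln => hb.
    have hm : `|cc 0 k| + e' <= m%:R * - al k.
      have : (`|cc 0 k| + e') / - al k <= m%:R.
        exact: le_trans hb (le_trans (ltW MBd) mM).
      by rewrite ler_pdivrMr ?oppr_gt0 // mulrC.
    have hcc : - cc 0 k <= `|cc 0 k| by rewrite -normrN ler_norm.
    rewrite mulrN in hm.
    rewrite ltr_norml in hk; case/andP: hk => hk1 hk2.
    have : 0 < (p k)%:~R :> R by lra.
    by rewrite ltr0z => /ltW.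
  + exists ord_max; split; first by [].
    rewrite /C unlift_none.
    by move: Mm; rewrite /M; lia.
- move=> j.
  have xE : x 0 j = \sum_k cc 0 k * V k j.
    rewrite -{1}(mulmxKV unitA x) [LHS]mxE; apply: eq_bigr => k _.
    by rewrite /V /A [X in _ * X]mxE.
  have vE : v ord_max 0 j = \sum_k al k * V k j.
    by rewrite vmax summxE; apply: eq_bigr => k _; rewrite mxE.
  have sE : (\sum_i (C i)%:~R *: v i) 0 j = \sum_k ((p k)%:~R + m%:R * al k) * V k j.
    rewrite summxE big_ord_recr /= /C unlift_none mxE vE.
    under eq_bigr do rewrite hw liftK mxE -hw.
    rewrite mulr_sumr -big_split /=; apply: eq_bigr => k _.
    rewrite /V -pmulrn; ring.
  rewrite xE sE -sumrB.
  apply: (le_lt_trans (ler_norm_sum _ _ _)).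
  apply: (@le_lt_trans _ _ (\sum_k e' * `|V k j|)).
    apply: ler_sum => k _.
    have -> : cc 0 k * V k j - ((p k)%:~R + m%:R * al k) * V k j
       = - (m%:R * al k + (p k)%:~R - cc 0 k) * V k j by ring.
    rewrite normrM normrN ler_wpM2r //; exact: ltW (hp k).
  rewrite -mulr_sumr.
  have : \sum_k `|V k j| <= Bs.
    rewrite /Bs; apply: ler_sum => k _.
    by apply: (@le_sum_term R n (fun j0 => `|V k j0|) j) => i.
  move=> h.
  have : e' * \sum_k `|V k j| <= e' * Bs by rewrite ler_wpM2l // ltW.
  nra.
Qed.


Theorem corollary4p7 (R : realType) (n t : nat) (htn : (t <= n)%N)
  (v : 'I_n.+1 -> 'rV[R]_n)
  (hGam : row_free (\matrix_(i < t) v (widen_ord (leqW htn) i))) :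
  dense (semigroup_preimage
           (fun i : 'I_t => v (widen_ord (leqW htn) i))
           (fun j : 'I_(n.+1 - t) =>
              v (gen_idx j)))
  <->
  (row_free (\matrix_(i < n) v (widen_ord (leqnSn n) i)) /\
   row_full (\matrix_(i < n) v (widen_ord (leqnSn n) i))) /\
  (exists alpha : 'I_n -> R,
     v ord_max = \sum_(i < n) alpha i *: v (widen_ord (leqnSn n) i) /\
     (forall i : 'I_n, (t <= i)%N -> alpha i < 0) /\
     Q_lin_indep (fun i : 'I_n.+1 =>
                    if unlift ord0 i is Some j then alpha j else 1)).
Proof.
split; [exact: forward hGam | exact: backward].
Qed.
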